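(* Let $\mathbb{K}$ be a field of characteristic zero and let $\mathbb{K}(x)[S_x]$ be the ring of linear recurrence operators, in which $S_x\, a(x) = a(x+1)\, S_x$ for $a\in\mathbb{K}(x)$. Let $m$ be a positive integer and let $L\in\mathbb{K}(x)[S_x]$ be nonzero, with $m$-exponent separation $L=L_0+L_1+\cdots+L_{m-1}$, where $L_i=\sum_{j=0}^{r_i}\ell_{i,j}S_x^{jm+i}$ with $\ell_{i,j}\in\mathbb{K}(x)$. Let $\mathcal{L}_m$ be the $m\times m$ matrix over $\mathbb{K}(x)[S_x]$ whose entry in row $i$ and column $j$ (indices $0\le i,j\le m-1$) is $L_{(i-j)\bmod m}$, i.e. its first row is $L_0, L_{m-1}, L_{m-2},\ldots,L_1$, its second row is $L_1,L_0,L_{m-1},\ldots,L_2$, and its last row is $L_{m-1},L_{m-2},\ldots,L_0$. Suppose $T_0,\ldots,T_{m-1}\in\mathbb{K}(x)[S_x]$ satisfy $[T_0,\ldots,T_{m-1}]\cdot\mathcal{L}_m=0$, i.e. $\sum_{i=0}^{m-1}T_i L_{(i-j)\bmod m}=0$ for every $j=0,\ldots,m-1$. Then $T_0+T_1+\cdots+T_{m-1}=0$.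
   Context: Products of operators are taken in the noncommutative ring $\mathbb{K}(x)[S_x]$, and the product of a row vector by a matrix is computed with the row entries multiplied on the left. *)

(* Defs.v *)
From HB Require Import structures.
From mathcomp Require Import all_boot all_order all_algebra.
Set Implicit Arguments. Unset Strict Implicit. Unset Printing Implicit Defensive.
Import Order.TTheory GRing.Theory Num.Theory.
Local Open Scope ring_scope.

Notation ratfun K := {fraction {poly K}}.

Definition shiftx (K : fieldType) (a : ratfun K) : ratfun K :=
  let r := repr a in
  tofrac ((\n_r) \Po ('X + 1)) / tofrac ((\d_r) \Po ('X + 1)).

(* Operators in K(x)[S_x] are represented by their coefficient polynomials
   sum_i a_i S_x^i  <->  \sum_i a_i 'X^i  in {poly K(x)}.
   Addition (and zero) are those of {poly K(x)}; the (noncommutative)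
   product is the Ore product given by S_x a = (shiftx a) S_x. *)
Notation recop K := {poly ratfun K}.

Definition op_mul (K : fieldType) (p q : recop K) : recop K :=
  \sum_(i < size p) \sum_(j < size q)
     (p`_i * iter i (@shiftx K) q`_j) *: 'X^(i + j).

Definition msep (K : fieldType) (m : nat) (L : recop K) (i : nat) : recop K :=
  \poly_(k < size L) (if (k %% m)%N == i then L`_k else 0).

(* Main.v *)
Require Import Defs.
From HB Require Import structures.
From mathcomp Require Import all_boot all_order all_algebra.
Import Order.TTheory GRing.Theory Num.Theory.
Local Open Scope ring_scope.
Lemma numer_neq0 {K : fieldType} (x : ratfun K) : x != 0 -> \n_(repr x) != 0.
Proof.
apply: contra => /eqP h; apply/eqP.
rewrite -[x]reprK -(tofrac0 _); unlock tofrac.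
apply/eqmodP => /=.
by rewrite FracField.equivfE /= !numden_Ratio ?oner_eq0 // h mul0r mulr0.
Qed.
Lemma numer0 {K : fieldType} : \n_(repr (0 : ratfun K)) = 0.
Proof.
have := FracField.equivf_l (Ratio (0 : {poly K}) 1).
rewrite !numden_Ratio ?oner_eq0 // mulr0 mulr1 => <-.
by rewrite -(tofrac0 _); unlock tofrac.
Qed.
Lemma shiftx0 {K : fieldType} : shiftx (0 : ratfun K) = 0.
Proof. by rewrite /shiftx numer0 comp_poly0 tofrac0 mul0r. Qed.
Lemma shiftx_neq0 {K : fieldType} (x : ratfun K) : x != 0 -> shiftx x != 0.
Proof.
move=> /numer_neq0 hn; rewrite /shiftx.
apply: mulf_neq0; last rewrite invr_eq0.
  by rewrite tofrac_eq0 comp_poly2_eq0 // size_XaddC.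
rewrite tofrac_eq0 comp_poly2_eq0 ?size_XaddC //.
exact: denom_ratioP.
Qed.
Lemma iter_shiftx0 {K : fieldType} i : iter i (@shiftx K) 0 = 0.
Proof. by elim: i => [|i ih]; rewrite ?iterS ?ih ?shiftx0. Qed.
Lemma iter_shiftx_neq0 {K : fieldType} i (x : ratfun K) : x != 0 -> iter i (@shiftx K) x != 0.
Proof. by move=> hx; elim: i => [|i ih]; rewrite ?iterS ?shiftx_neq0. Qed.
From mathcomp Require Import zify.
Lemma modarith (m r i j : nat) : (r < m)%N -> (i < m)%N -> (j < m)%N ->
  (r == (i + m - j) %% m)%N = (j == (i + m - r) %% m)%N.
Proof.
have E x y : (x < m)%N -> (y < m)%N ->
    ((x + m - y) %% m = if (y <= x)%N then x - y else x + m - y)%N.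
  move=> hx hy; case: ifP => hyx.
    have -> : (x + m - y = (x - y) + m)%N by lia.
    by rewrite modnDr modn_small //; lia.
  by rewrite modn_small //; lia.
move=> hr hi hj; rewrite !E //.
case: ifP; case: ifP => *; apply/eqP/eqP; lia.
Qed.
Definition opm {K : fieldType} (n1 n2 : nat) (p q : recop K) : recop K :=
  \sum_(i < n1) \sum_(j < n2) (p`_i * iter i (@shiftx K) q`_j) *: 'X^(i + j).

Lemma op_mulE {K : fieldType} n1 n2 (p q : recop K) :
  (size p <= n1)%N -> (size q <= n2)%N -> op_mul p q = opm n1 n2 p q.
Proof.
move=> hp hq; rewrite /op_mul /opm.
rewrite (@big_ord_widen _ 0 +%R (size p) n1
  (fun i => \sum_(j < size q) (p`_i * iter i (@shiftx K) q`_j) *: 'X^(i + j)) hp).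
rewrite big_mkcond; apply: eq_bigr => i _; case: ifP => hi.
  rewrite (@big_ord_widen _ 0 +%R (size q) n2
    (fun j => (p`_i * iter i (@shiftx K) q`_j) *: 'X^(i + j)) hq).
  rewrite big_mkcond; apply: eq_bigr => j _; case: ifP => hj //.
  have -> : q`_j = 0 by rewrite nth_default // leqNgt hj.
  by rewrite iter_shiftx0 mulr0 scale0r.
have -> : p`_i = 0 by rewrite nth_default // leqNgt hi.
by rewrite big1 // => j _; rewrite mul0r scale0r.
Qed.

Lemma opm_suml {K : fieldType} n1 n2 m (P : 'I_m -> recop K) q :
  opm n1 n2 (\sum_(k < m) P k) q = \sum_(k < m) opm n1 n2 (P k) q.
Proof.
rewrite /opm.
under eq_bigr do under eq_bigr do rewrite coef_sum mulr_suml scaler_suml.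
rewrite [RHS]exchange_big; apply: eq_bigr => i _; rewrite [RHS]exchange_big //.
Qed.

Lemma coef_msep_sum {K : fieldType} m (hm : (0 < m)%N) (L : recop K) (i : 'I_m) a b :
  \sum_(j < m) iter a (@shiftx K) (msep m L ((i + m - j) %% m)%N)`_b
  = iter a (@shiftx K) L`_b.
Proof.
have hj0 : ((i + m - b %% m) %% m < m)%N by rewrite ltn_pmod.
rewrite (bigD1 (Ordinal hj0)) //; rewrite big1; last first.
  move=> j hj; rewrite coef_poly; case: ifP => hb; last by rewrite iter_shiftx0.
  rewrite modarith ?ltn_pmod //; case: eqP => [hjj|]; last by rewrite iter_shiftx0.
  by move: hj => /negP []; apply/eqP/val_inj.
rewrite Monoid.mulm1 coef_poly; case: ifP => hb.
  by rewrite modarith ?ltn_pmod ?eqxx.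
have -> : L`_b = 0 by rewrite nth_default // leqNgt hb.
by rewrite iter_shiftx0.
Qed.

Lemma opm_sumr {K : fieldType} m (hm : (0 < m)%N) n1 (p L : recop K) (i : 'I_m) :
  \sum_(j < m) opm n1 (size L) p (msep m L ((i + m - j) %% m)%N) = opm n1 (size L) p L.
Proof.
rewrite /opm exchange_big; apply: eq_bigr => a _; rewrite exchange_big.
apply: eq_bigr => b _; rewrite -scaler_suml -mulr_sumr.
by rewrite coef_msep_sum.
Qed.

Lemma op_mul_eq0 {K : fieldType} (p q : recop K) : q != 0 -> op_mul p q = 0 -> p = 0.
Proof.
move=> hq h; apply/eqP; apply: contraT => hp.
have hsp : size p = (size p).-1.+1 by rewrite prednK // size_poly_gt0.
have hsq : size q = (size q).-1.+1 by rewrite prednK // size_poly_gt0.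
set a := (size p).-1 in hsp; set b := (size q).-1 in hsq.
have := congr1 (fun r : recop K => r`_(a + b)) h.
rewrite (op_mulE a.+1 b.+1) ?hsp ?hsq // coef0 /opm.
rewrite coef_sum (bigD1 ord_max) //= coef_sum (bigD1 ord_max) //=.
rewrite coefZ coefXn eqxx mulr1 big1 ?addr0; last first.
  move=> j hj; rewrite coefZ coefXn.
  have : (j < b)%N by rewrite ltn_neqAle -(inj_eq val_inj) in hj *; rewrite hj -ltnS ltn_ord.
  by move=> hjb; rewrite eqn_add2l gtn_eqF // mulr0.
rewrite big1 ?addr0; last first.
  move=> i hi; rewrite coef_sum big1 // => j _; rewrite coefZ coefXn.
  have : (i < a)%N by rewrite ltn_neqAle -(inj_eq val_inj) in hi *; rewrite hi -ltnS ltn_ord.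
  move=> hia; have hjb : (j <= b)%N by rewrite -ltnS ltn_ord.
  by rewrite [_ == _]gtn_eqF ?mulr0 //; lia.
have e1 : p`_a != 0 by move: hp; rewrite -lead_coef_eq0 lead_coefE; exact.
have e2 : iter a (@shiftx K) q`_b != 0.
  by apply: iter_shiftx_neq0; move: hq; rewrite -lead_coef_eq0 lead_coefE; exact.
by move/eqP; rewrite mulf_eq0 (negbTE e1) (negbTE e2).
Qed.

Theorem lemma4p1 (K : fieldType) (hK : [pchar K] =i pred0)
  (m : nat) (hm : (0 < m)%N) (L : recop K) (hL : L != 0)
  (T : 'I_m -> recop K) :
  (forall j : 'I_m,
     \sum_(i < m) op_mul (T i) (msep m L ((i + m - j) %% m)%N) = 0) ->
  \sum_(i < m) T i = 0.
Proof.
move=> H.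
set N := (\max_(i < m) size (T i))%N.
have hT i : (size (T i) <= N)%N by rewrite /N; exact: (@leq_bigmax _ (fun k : 'I_m => size (T k)) i).
have hS : (size (\sum_(i < m) T i)%R <= N)%N by exact: size_sum.
apply: (@op_mul_eq0 K (\sum_(i < m) T i) L hL).
have H2 : \sum_(j < m) \sum_(i < m) op_mul (T i) (msep m L ((i + m - j) %% m)%N) = 0.
  by rewrite big1.
rewrite exchange_big /= in H2.
rewrite (op_mulE _ _ _ _ hS (leqnn _)) opm_suml -[RHS]H2; apply: eq_bigr => i _.
rewrite -(@opm_sumr K m hm N (T i) L i); apply: eq_bigr => j _.
by rewrite (op_mulE _ (size L) _ _ (hT i)) // size_poly.
Qed.
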